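(* Let $b\ge 2$ and $S\in\Sigma_b^\infty$. The following are equivalent: (a) $\limsup_{n\to\infty}\frac{\log d_{LZ(b)}(S\upharpoonright n)}{n}>0$; (b) there exist $\alpha<1$ and infinitely many full parses $w\sqsubseteq S$ with $D(w)\log_b|w|<\alpha(b-1)|w|$; (c) there exist $\alpha<1$ and infinitely many full parses $w\sqsubseteq S$ with $D(w)\log_b D(w)<\alpha(b-1)|w|$.
   Context: $\Sigma_b=\{0,\dots,b-1\}$; $\Sigma_b^\infty$ is the set of infinite sequences over $\Sigma_b$; $S\upharpoonright n$ is the length-$n$ prefix of $S$; $w\sqsubseteq S$ means $w$ is a prefix of $S$. Lempel–Ziv parsing in base $b$: let $T_0=\{\lambda\}\cup\Sigma_b$. Given $w$, parse left to right: having found phrases $x(1),\dots,x(i)$ and tree $T_i$, the next phrase $x(i+1)$ is the shortest nonempty prefix of the remaining input that is a leaf of $T_i$, and $T_{i+1}=T_i\cup\{x(i+1)a:a\in\Sigma_b\}$. If the input ends exactly at the end of a phrase (or $w=\lambda$), $w=x(1)\cdots x(j)$ is a full parse; otherwise $w=x(1)\cdots x(j)u$ with $u$ a nonempty interior vertex of $T_j$, the partial phrase. $D(w)=1+(b-1)j$ if $w$ is a full parse with $j$ phrases, and $D(w)=1+(b-1)(j+1)$ if $w$ has $j$ full phrases and a partial phrase $u$; then $L(u)$ is the number of leaves of $T_j$ extending $u$. With $\mathrm{fact}_b(1+(b-1)r)=\prod_{k=1}^r(1+(b-1)k)$, the base-$b$ Lempel–Ziv martingale is $d_{LZ(b)}(w)=b^{|w|}/\mathrm{fact}_b(D(w))$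 if $w$ is a full parse, and $b^{|w|}L(u)/\mathrm{fact}_b(D(w))$ otherwise. *)

(* Defs.v *)
From Stdlib Require Import Reals Lra Lia Arith List Bool.
Import ListNotations.
Open Scope R_scope.

(* Words over Sigma_b are lists of naturals (symbols < b). *)
Definition word := list nat.

Definition word_in (x : word) (T : list word) : bool :=
  if in_dec (list_eq_dec Nat.eq_dec) x T then true else false.

Definition children (b : nat) (x : word) : list word :=
  map (fun a => x ++ [a]) (seq 0 b).

Definition is_leaf (b : nat) (T : list word) (x : word) : bool :=
  word_in x T && negb (existsb (fun c => word_in c T) (children b x)).

Definition T0 (b : nat) : list word := [] :: map (fun a => [a]) (seq 0 b).

(* LZ parsing of [rest], where [cur] is the portion of the current phrase read
   so far.  Returns (number of full phrases j, tree T_j, partial phrase u);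
   u = [] means a full parse.  The next phrase is the shortest nonempty
   prefix of the remaining input that is a leaf of the current tree. *)
Fixpoint lz_parse (b : nat) (T : list word) (cur rest : word)
  : nat * list word * word :=
  match rest with
  | [] => (0%nat, T, cur)
  | a :: r =>
      let cur' := cur ++ [a] in
      if is_leaf b T cur' then
        match lz_parse b (T ++ children b cur') [] r with
        | (j, T', u) => (S j, T', u)
        end
      else lz_parse b T cur' r
  end.

Definition lz (b : nat) (w : word) := lz_parse b (T0 b) [] w.

Definition nphrases (b : nat) (w : word) : nat := fst (fst (lz b w)).
Definition final_tree (b : nat) (w : word) : list word := snd (fst (lz b w)).
Definition partial_phrase (b : nat) (w : word) : word := snd (lz b w).

Definition full_parse (b : nat) (w : word) : Prop := partial_phrase b w = [].

Definition Dr (b : nat) (w : word) : nat :=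
  match partial_phrase b w with
  | [] => nphrases b w
  | _ => S (nphrases b w)
  end.
Definition D (b : nat) (w : word) : nat := (1 + (b - 1) * Dr b w)%nat.

(* fact_b(1 + (b-1) r) = prod_{k=1}^r (1 + (b-1) k), indexed by r *)
Fixpoint factb (b r : nat) : nat :=
  match r with
  | O => 1%nat
  | S r' => (factb b r' * (1 + (b - 1) * S r'))%nat
  end.

Fixpoint is_prefix (u x : word) : bool :=
  match u, x with
  | [], _ => true
  | a :: u', c :: x' => Nat.eqb a c && is_prefix u' x'
  | _ :: _, [] => false
  end.

Definition Lleaves (b : nat) (T : list word) (u : word) : nat :=
  length (filter (fun x => is_leaf b T x && is_prefix u x) T).

Definition d_LZ (b : nat) (w : word) : R :=
  match partial_phrase b w with
  | [] => INR b ^ length w / INR (factb b (Dr b w))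
  | u => INR b ^ length w * INR (Lleaves b (final_tree b w) u)
           / INR (factb b (Dr b w))
  end.

Definition prefix (S : nat -> nat) (n : nat) : word := map S (seq 0 n).

Definition logb (b : nat) (x : R) : R := ln x / ln (INR b).

(* Main.v *)
Require Import Defs.
From Stdlib Require Import Reals List.
From Stdlib Require Import Lra Lia Arith Bool.
Import ListNotations.
Open Scope R_scope.


Lemma word_in_iff x T : word_in x T = true <-> In x T.
Proof. unfold word_in; destruct in_dec; split; intros; auto; discriminate. Qed.

Lemma lz_parse_app b w : forall T cur v,
  lz_parse b T cur (w ++ v) =
  match lz_parse b T cur w with
  | (j1, T1, c1) => match lz_parse b T1 c1 v with
                    | (j2, T2, c2) => ((j1 + j2)%nat, T2, c2) end end.
Proof.
  induction w as [|a w IH]; intros T cur v; simpl.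
  - destruct (lz_parse b T cur v) as [[j2 T2] c2]; reflexivity.
  - destruct (is_leaf b T (cur ++ [a])).
    + rewrite IH. destruct (lz_parse b (T ++ children b (cur ++ [a])) [] w) as [[j1 T1] c1].
      destruct (lz_parse b T1 c1 v) as [[j2 T2] c2]. reflexivity.
    + apply IH.
Qed.

Lemma lz_snoc b w a :
  lz b (w ++ [a]) =
  match lz b w with
  | (j, T, u) => if is_leaf b T (u ++ [a]) then (S j, T ++ children b (u ++ [a]), [])
                 else (j, T, u ++ [a]) end.
Proof.
  unfold lz. rewrite lz_parse_app.
  destruct (lz_parse b (T0 b) [] w) as [[j T] u]. simpl.
  destruct (is_leaf b T (u ++ [a])); simpl; f_equal; f_equal; lia.
Qed.

Definition Inv (b j : nat) (T : list word) (u : word) : Prop :=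
  (forall x a, In (x ++ [a]) T -> In x T) /\
  (forall x a c, In x T -> In (x ++ [a]) T -> (c < b)%nat -> In (x ++ [c]) T) /\
  (forall x, In x T -> (length x <= j + 1)%nat) /\
  length T = (1 + b + b * j)%nat /\
  In [] T /\ In [0%nat] T /\
  In u T /\ is_leaf b T u = false.

Lemma in_children b x y : In y (children b x) <-> exists c, (c < b)%nat /\ y = x ++ [c].
Proof.
  unfold children. rewrite in_map_iff. split.
  - intros [c [H1 H2]]. apply in_seq in H2. exists c. split; [lia|auto].
  - intros [c [H1 H2]]. exists c. split; auto. apply in_seq. lia.
Qed.

Lemma is_leaf_false b T x : In x T -> is_leaf b T x = false ->
  exists c, (c < b)%nat /\ In (x ++ [c]) T.
Proof.
  unfold is_leaf. intros H1 H2. apply word_in_iff in H1. rewrite H1 in H2. simpl in H2.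
  apply negb_false_iff in H2. apply existsb_exists in H2.
  destruct H2 as [y [Hy Hw]]. apply in_children in Hy. destruct Hy as [c [Hc ->]].
  exists c. split; auto. apply word_in_iff; auto.
Qed.

Lemma is_leaf_true b T x : is_leaf b T x = true ->
  In x T /\ forall c, (c < b)%nat -> ~ In (x ++ [c]) T.
Proof.
  unfold is_leaf. intros H. apply andb_true_iff in H. destruct H as [H1 H2].
  split. apply word_in_iff; auto.
  intros c Hc Hin. apply negb_true_iff in H2.
  assert (existsb (fun c0 => word_in c0 T) (children b x) = true).
  { apply existsb_exists. exists (x ++ [c]). split. apply in_children. eauto.
    apply word_in_iff; auto. }
  congruence.
Qed.

Lemma is_leaf_false_of b T x c : (c < b)%nat -> In (x ++ [c]) T -> is_leaf b T x = false.
Proof.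
  intros Hc Hin. destruct (is_leaf b T x) eqn:E; auto.
  apply is_leaf_true in E. destruct E as [_ E]. exfalso. eapply E; eauto.
Qed.

Lemma Inv_init b : (1 <= b)%nat -> Inv b 0 (T0 b) [].
Proof.
  intros Hb. unfold T0. repeat split.
  - intros x a H. destruct H as [H|H].
    + destruct x; discriminate.
    + apply in_map_iff in H. destruct H as [c [H _]].
      destruct x as [|y x]; [left; auto|]. simpl in H. inversion H. destruct x; discriminate.
  - intros x a c H1 H2 Hc. destruct H1 as [<-|H1].
    + right. apply in_map_iff. exists c. split; auto. apply in_seq; lia.
    + apply in_map_iff in H1. destruct H1 as [d [<- _]].
      destruct H2 as [H2|H2]; [discriminate|]. apply in_map_iff in H2.
      destruct H2 as [e [H2 _]]. discriminate.
  - intros x H. destruct H as [<-|H]; simpl; [lia|]. apply in_map_iff in H.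
    destruct H as [c [<- _]]. simpl; lia.
  - simpl. rewrite length_map, length_seq. lia.
  - left; auto.
  - right. apply in_map_iff. exists 0%nat. split; auto. apply in_seq; lia.
  - left; auto.
  - apply (is_leaf_false_of b _ [] 0); [lia|]. right. apply in_map_iff. exists 0%nat.
    split; auto. apply in_seq; lia.
Qed.

Lemma Inv_step b j T u a : (1 <= b)%nat -> (a < b)%nat -> Inv b j T u ->
  In (u ++ [a]) T /\
  (is_leaf b T (u ++ [a]) = true -> Inv b (S j) (T ++ children b (u ++ [a])) []) /\
  (is_leaf b T (u ++ [a]) = false -> Inv b j T (u ++ [a])).
Proof.
  intros Hb Ha [P [A [Dp [Ln [H0 [H1 [Hu Hl]]]]]]].
  assert (Hua : In (u ++ [a]) T).
  { destruct (is_leaf_false b T u Hu Hl) as [c [Hc Hin]]. eapply A; eauto. }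
  split; [auto|split].
  - intros Hleaf. apply is_leaf_true in Hleaf. destruct Hleaf as [_ Hno].
    set (y := u ++ [a]) in *.
    repeat split.
    + intros x c H. apply in_app_or in H. destruct H as [H|H].
      * apply in_or_app; left; eauto.
      * apply in_children in H. destruct H as [d [_ H]]. apply app_inj_tail in H.
        destruct H as [-> _]. apply in_or_app; left; auto.
    + intros x a' c Hx Hxa Hc. apply in_app_or in Hxa. destruct Hxa as [Hxa|Hxa].
      * apply in_or_app; left. eapply A; eauto.
      * apply in_children in Hxa. destruct Hxa as [d [_ Hd]]. apply app_inj_tail in Hd.
        destruct Hd as [-> _]. apply in_or_app; right. apply in_children. eauto.
    + intros x Hx. apply in_app_or in Hx. destruct Hx as [Hx|Hx].
      * specialize (Dp x Hx). lia.
      * apply in_children in Hx. destruct Hx as [d [_ ->]]. rewrite length_app.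
        specialize (Dp y Hua). simpl. lia.
    + rewrite length_app. unfold children. rewrite length_map, length_seq. lia.
    + apply in_or_app; left; auto.
    + apply in_or_app; left; auto.
    + apply in_or_app; left; auto.
    + apply (is_leaf_false_of b _ [] 0); [lia|]. apply in_or_app; left; auto.
  - intros Hl'. repeat split; auto.
Qed.

Lemma prefix_S S n : prefix S (Datatypes.S n) = prefix S n ++ [S n].
Proof. unfold prefix. rewrite seq_S, map_app. reflexivity. Qed.

Lemma prefix_length S n : length (prefix S n) = n.
Proof. unfold prefix. rewrite length_map, length_seq. auto. Qed.

Definition StateP b S n :=
  match lz b (prefix S n) with
  | (j, T, u) => Inv b j T u /\ (2 * n <= j * (j + 1) + 2 * length u)%nat /\ (j <= n)%nat /\
     exists m, (m + length u)%nat = n /\ partial_phrase b (prefix S m) = [] /\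
        nphrases b (prefix S m) = j
  end.

Lemma state b S : (1 <= b)%nat -> (forall i, (S i < b)%nat) -> forall n, StateP b S n.
Proof.
  intros Hb HS n. induction n as [|n IH].
  - unfold StateP. unfold prefix; simpl. unfold lz; simpl.
    split; [apply Inv_init; auto|]. split; [lia|]. split; [lia|].
    exists 0%nat. simpl. split; auto.
  - unfold StateP in *. rewrite prefix_S, lz_snoc.
    destruct (lz b (prefix S n)) as [[j T] u] eqn:E.
    destruct IH as [I [H2 [H3 [m [Hm1 [Hm2 Hm3]]]]]].
    destruct (Inv_step b j T u (S n) Hb (HS n) I) as [Hin [HL HN]].
    assert (Hd : (length (u ++ [S n]) <= j + 1)%nat).
    { destruct I as [_ [_ [Dp _]]]. apply Dp; auto. }
    rewrite length_app in Hd; simpl in Hd.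
    destruct (is_leaf b T (u ++ [S n])) eqn:El.
    + split; [auto|]. simpl. split; [nia|]. split; [lia|].
      exists (Datatypes.S n). split; [lia|].
      unfold partial_phrase, nphrases. rewrite prefix_S, lz_snoc, E, El. auto.
    + split; [auto|]. rewrite length_app; simpl. split; [lia|]. split; [lia|].
      exists m. split; [lia|]. auto.
Qed.

Lemma ln_le' x y : 0 < x -> x <= y -> ln x <= ln y.
Proof. intros Hx [H|H]. left; apply ln_increasing; auto. subst; lra. Qed.

Lemma ln_le_sub1 y : 0 < y -> ln y <= y - 1.
Proof.
  intros Hy. rewrite <- (ln_exp (y - 1)). apply ln_le'; auto.
  pose proof (exp_ineq1_le (y - 1)). lra.
Qed.

Lemma ln_tangent y t : 0 < y -> 0 < t -> ln y <= t * y - 1 - ln t.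
Proof.
  intros Hy Ht. pose proof (ln_le_sub1 (t * y)) as H. rewrite ln_mult in H by lra.
  assert (0 < t * y) by nra. lra.
Qed.

Lemma ln_nonneg x : 1 <= x -> 0 <= ln x.
Proof. intros H. rewrite <- ln_1. apply ln_le'; lra. Qed.

Lemma factb_pos b r : (1 <= factb b r)%nat.
Proof. induction r; simpl; [lia|]. nia. Qed.

Lemma INR_factb_pos b r : 0 < INR (factb b r).
Proof. apply lt_0_INR. pose proof (factb_pos b r). lia. Qed.

Lemma fact_lower b j : (2 <= b)%nat -> INR j * ln (INR j) - INR j <= ln (INR (factb b j)).
Proof.
  intros Hb. induction j as [|j IH].
  - simpl. rewrite ln_1. lra.
  - simpl factb. rewrite mult_INR. rewrite ln_mult; [|apply INR_factb_pos|]. 2:{ apply lt_0_INR. apply Nat.lt_0_succ. }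
    idtac.
    assert (H1 : ln (INR (S j)) <= ln (INR (1 + (b - 1) * S j))).
    { apply ln_le'. apply lt_0_INR; lia. apply le_INR. nia. }
    rewrite S_INR in *.
    destruct j as [|j'].
    + simpl. rewrite Rplus_0_l, ln_1, Rmult_1_l. simpl in H1. rewrite Rplus_0_l in H1.
      rewrite ln_1 in H1.
      assert (0 <= ln (INR (factb b 0))) by (simpl; rewrite ln_1; lra). lra.
    + set (x := INR (S j')) in *.
      assert (Hx : 1 <= x) by (unfold x; rewrite S_INR; pose proof (pos_INR j'); lra).
      (* (x+1) ln(x+1) - (x+1) <= x ln x - x + ln (x+1) *)
      (* i.e. x (ln(x+1) - ln x) <= 1 *)
      assert (Hk : ln (x + 1) - ln x <= 1 / x).
      { pose proof (ln_le_sub1 ((x + 1) / x)) as H.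
        unfold Rdiv in H. rewrite ln_mult in H by (try apply Rinv_0_lt_compat; lra).
        rewrite ln_Rinv in H by lra.
        assert ((x + 1) * / x - 1 = 1 / x) by (field; lra). assert (Hp : 0 < (x + 1) * / x) by (apply Rmult_lt_0_compat; [lra| apply Rinv_0_lt_compat; lra]). specialize (H Hp). lra. }
      assert (x * (ln (x + 1) - ln x) <= 1).
      { apply Rmult_le_compat_l with (r := x) in Hk; [|lra].
        replace (x * (1 / x)) with 1 in Hk by (field; lra). lra. }
      change (S ((b - 1) * S (S j'))) with (1 + (b - 1) * S (S j'))%nat.
      assert (E : (x + 1) * ln (x + 1) - (x + 1) = x * (ln (x + 1) - ln x) + (x * ln x - x) + ln (x + 1) - 1) by ring.
      rewrite E. lra.
Qed.

Lemma factb_le_pow b r : (factb b r <= (1 + (b - 1) * r) ^ r)%nat.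
Proof.
  induction r as [|r IH]; [simpl; lia|].
  assert ((1 + (b - 1) * r) ^ r <= (1 + (b - 1) * S r) ^ r)%nat.
  { apply Nat.pow_le_mono_l. nia. }
  change (factb b (S r)) with (factb b r * (1 + (b - 1) * S r))%nat.
  rewrite Nat.pow_succ_r'.
  rewrite (Nat.mul_comm (factb b r)). apply Nat.mul_le_mono_l. lia.
Qed.

Lemma fact_upper b r : ln (INR (factb b r)) <= INR r * ln (INR (1 + (b - 1) * r)).
Proof.
  rewrite <- ln_pow by (apply lt_0_INR; apply Nat.lt_0_succ).
  rewrite <- pow_INR. apply ln_le'. apply INR_factb_pos. apply le_INR. apply factb_le_pow.
Qed.

Lemma full_facts b S m : partial_phrase b (prefix S m) = [] ->
  D b (prefix S m) = (1 + (b - 1) * nphrases b (prefix S m))%nat /\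
  d_LZ b (prefix S m) = INR b ^ m / INR (factb b (nphrases b (prefix S m))).
Proof.
  intros H. unfold D, d_LZ. unfold Dr. rewrite H. rewrite prefix_length. split; reflexivity.
Qed.

Lemma Lleaves_le b T u : (Lleaves b T u <= length T)%nat.
Proof. unfold Lleaves. apply filter_length_le. Qed.

Lemma d_upper b S n : (2 <= b)%nat -> (forall i, (S i < b)%nat) ->
  0 <= d_LZ b (prefix S n) <=
  2 * INR b ^ n / INR (factb b (nphrases b (prefix S n))).
Proof.
  intros Hb HS. pose proof (state b S ltac:(lia) HS n) as St. unfold StateP in St.
  unfold d_LZ, Dr, nphrases, partial_phrase, final_tree in *.
  destruct (lz b (prefix S n)) as [[j T] u]. simpl. simpl in St.
  destruct St as [I _]. destruct I as [_ [_ [_ [Ln _]]]].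
  rewrite prefix_length.
  pose proof (INR_factb_pos b j) as Fp.
  assert (Bp : 0 < INR b ^ n) by (apply pow_lt; apply lt_0_INR; lia).
  destruct u as [|c u].
  - split. apply Rlt_le, Rdiv_lt_0_compat; auto.
    unfold Rdiv. apply Rmult_le_compat_r. left; apply Rinv_0_lt_compat; auto. lra.
  - pose proof (Lleaves_le b T (c :: u)) as HL. rewrite Ln in HL.
    change (factb b (Datatypes.S j)) with (factb b j * (1 + (b - 1) * Datatypes.S j))%nat.
    rewrite mult_INR.
    assert (Kp : 0 < INR (1 + (b - 1) * Datatypes.S j)) by (apply lt_0_INR; apply Nat.lt_0_succ).
    assert (HL2 : INR (Lleaves b T (c :: u)) <= 2 * INR (1 + (b - 1) * Datatypes.S j)).
    { assert (X : INR (Lleaves b T (c :: u)) <= INR (2 * (1 + (b - 1) * Datatypes.S j)))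
        by (apply le_INR; nia).
      rewrite mult_INR in X. replace (INR 2) with 2 in X by (simpl; ring). exact X. }
    split.
    + apply Rmult_le_pos. apply Rmult_le_pos; [lra| apply pos_INR].
      left; apply Rinv_0_lt_compat; nra.
    + unfold Rdiv. rewrite Rinv_mult.
      set (F := INR (factb b j)) in *. set (K := INR (1 + (b - 1) * Datatypes.S j)) in *.
      set (Lv := INR (Lleaves b T (c :: u))) in *. set (B := INR b ^ n) in *.
      assert (0 < / F) by (apply Rinv_0_lt_compat; auto).
      assert (0 < / K) by (apply Rinv_0_lt_compat; auto).
      assert (Lv * / K <= 2) .
      { apply Rmult_le_reg_r with K; auto. rewrite Rmult_assoc, Rinv_l by lra. lra. }
      assert (EE : B * Lv * (/ F * / K) = B * / F * (Lv * / K)) by ring.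
      rewrite EE. assert (0 < B * / F) by nra. nra.
Qed.

Lemma state_facts b S n : (2 <= b)%nat -> (forall i, (S i < b)%nat) ->
  (nphrases b (prefix S n) <= n)%nat /\
  (length (partial_phrase b (prefix S n)) <= nphrases b (prefix S n) + 1)%nat /\
  (partial_phrase b (prefix S n) = [] ->
     (2 * n <= nphrases b (prefix S n) * (nphrases b (prefix S n) + 1))%nat) /\
  exists m, (m + length (partial_phrase b (prefix S n)))%nat = n /\
     partial_phrase b (prefix S m) = [] /\ nphrases b (prefix S m) = nphrases b (prefix S n).
Proof.
  intros Hb HS. pose proof (state b S ltac:(lia) HS n) as St. unfold StateP in St.
  unfold nphrases, partial_phrase in *.
  destruct (lz b (prefix S n)) as [[j T] u]. simpl.
  destruct St as [I [H2 [H3 H4]]].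
  split; auto. split.
  { destruct I as [_ [_ [Dp [_ [_ [_ [Hu _]]]]]]]. apply Dp; auto. }
  split; auto. intros ->. simpl in H2. lia.
Qed.

Lemma Lpos b : (2 <= b)%nat -> 0 < ln (INR b).
Proof.
  intros Hb. rewrite <- ln_1. apply ln_increasing. lra.
  apply le_INR in Hb. simpl in Hb. lra.
Qed.

Lemma ln_d_full b S m : (2 <= b)%nat -> partial_phrase b (prefix S m) = [] ->
  ln (d_LZ b (prefix S m)) = INR m * ln (INR b) - ln (INR (factb b (nphrases b (prefix S m)))).
Proof.
  intros Hb H. destruct (full_facts b S m H) as [_ ->].
  assert (0 < INR b) by (apply lt_0_INR; lia).
  unfold Rdiv. rewrite ln_mult, ln_pow, ln_Rinv; auto; try ring.
  apply INR_factb_pos. apply pow_lt; auto. apply Rinv_0_lt_compat, INR_factb_pos.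
Qed.

Lemma ln_d_upper b S n : (2 <= b)%nat -> (forall i, (S i < b)%nat) ->
  0 < ln (d_LZ b (prefix S n)) ->
  ln (d_LZ b (prefix S n)) <= ln 2 + INR n * ln (INR b) - ln (INR (factb b (nphrases b (prefix S n)))).
Proof.
  intros Hb HS Hl. destruct (d_upper b S n Hb HS) as [H0 H1].
  assert (Hp : 0 < d_LZ b (prefix S n)).
  { destruct H0 as [H0|H0]; auto. rewrite <- H0 in Hl. unfold ln in Hl.
    destruct (Rlt_dec 0 0); lra. }
  assert (0 < INR b) by (apply lt_0_INR; lia).
  pose proof (INR_factb_pos b (nphrases b (prefix S n))).
  eapply Rle_trans. apply ln_le'; eauto.
  unfold Rdiv. rewrite ln_mult, ln_mult, ln_pow, ln_Rinv; auto; try lra.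
  apply pow_lt; auto. apply Rmult_lt_0_compat; [lra|apply pow_lt; auto].
  apply Rinv_0_lt_compat; auto.
Qed.

Definition Pa b S := exists eps : R, eps > 0 /\
      forall N : nat, exists n : nat, (N <= n)%nat /\ (1 <= n)%nat /\
        ln (d_LZ b (prefix S n)) / INR n > eps.
Definition Pb b S := exists alpha : R, alpha < 1 /\
      forall N : nat, exists n : nat, (N <= n)%nat /\
        full_parse b (prefix S n) /\
        INR (D b (prefix S n)) * logb b (INR (length (prefix S n)))
          < alpha * INR (b - 1) * INR (length (prefix S n)).
Definition Pc b S := exists alpha : R, alpha < 1 /\
      forall N : nat, exists n : nat, (N <= n)%nat /\
        full_parse b (prefix S n) /\
        INR (D b (prefix S n)) * logb b (INR (D b (prefix S n)))
          < alpha * INR (b - 1) * INR (length (prefix S n)).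

Lemma INR_D b r : (2 <= b)%nat -> INR (1 + (b - 1) * r) = 1 + INR (b - 1) * INR r.
Proof. intros. rewrite plus_INR, mult_INR. simpl. ring. Qed.

Lemma B1_ge1 b : (2 <= b)%nat -> 1 <= INR (b - 1).
Proof. intros. replace 1 with (INR 1) by reflexivity. apply le_INR. lia. Qed.

Lemma INR_b b : (2 <= b)%nat -> INR b = INR (b - 1) + 1.
Proof. intros. rewrite minus_INR by lia. simpl. ring. Qed.

Lemma A_of_C b S : (2 <= b)%nat -> (forall i, (S i < b)%nat) -> Pc b S -> Pa b S.
Proof.
  intros Hb HS [alpha [Ha H]].
  pose proof (Lpos b Hb) as HL. set (L := ln (INR b)) in *.
  exists ((1 - alpha) * L). split. { apply Rmult_lt_0_compat; lra. }
  intros N. destruct (H N) as [m [Hm [Hf Hi]]]. exists m. split; auto.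
  unfold full_parse in Hf. destruct (full_facts b S m Hf) as [HD _].
  destruct (state_facts b S m Hb HS) as [Hrm _].
  rewrite HD, prefix_length in Hi. unfold logb in Hi. fold L in Hi.
  rewrite ln_d_full by auto. fold L.
  set (r := nphrases b (prefix S m)) in *.
  pose proof (fact_upper b r) as Fu.
  rewrite INR_D in Hi, Fu by auto.
  pose proof (B1_ge1 b Hb) as B1.
  set (B := INR (b - 1)) in *. set (R := INR r) in *.
  assert (HR : 0 <= R) by apply pos_INR.
  set (lD := ln (1 + B * R)) in *.
  assert (HlD : 0 <= lD) by (apply ln_nonneg; nra).
  assert (Hi2 : (1 + B * R) * lD < alpha * B * INR m * L).
  { replace ((1 + B * R) * lD) with ((1 + B * R) * (lD / L) * L) by (field; lra).
    apply Rmult_lt_compat_r; auto. }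
  assert (Hi3 : B * (R * lD) < B * (alpha * INR m * L)) by nra.
  assert (Hi4 : R * lD < alpha * INR m * L) by (apply Rmult_lt_reg_l with B; lra).
  assert (Hm1 : (1 <= m)%nat).
  { destruct m; [|lia]. exfalso. simpl in Hi2. assert (r = 0%nat) by lia.
    unfold R in *. rewrite H0 in *. simpl in Hi2. rewrite Rmult_0_r, Rplus_0_r in Hi2.
    unfold lD in Hi2. rewrite Rmult_0_r, Rplus_0_r, ln_1 in Hi2. lra. }
  split; auto.
  assert (HM : 0 < INR m) by (apply lt_0_INR; lia).
  apply Rmult_gt_reg_l with (INR m); auto.
  replace (INR m * ((INR m * L - ln (INR (factb b r))) / INR m)) with (INR m * L - ln (INR (factb b r))) by (field; lra).
  nra.
Qed.

Lemma big_nat (A : R) : exists M : nat, (1 <= M)%nat /\ A <= ln (INR M).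
Proof.
  destruct (INR_archimed 1 (exp A)) as [M HM]; [lra|].
  rewrite Rmult_1_r in HM. exists (Datatypes.S M). split; [lia|].
  rewrite <- (ln_exp A) at 1. apply ln_le'. apply exp_pos. rewrite S_INR. lra.
Qed.

Lemma ln_mono_nat m M : (1 <= M)%nat -> (M <= m)%nat -> ln (INR M) <= ln (INR m).
Proof. intros. apply ln_le'. apply lt_0_INR; lia. apply le_INR; lia. Qed.

Lemma C_of_B b S : (2 <= b)%nat -> (forall i, (S i < b)%nat) -> Pb b S -> Pc b S.
Proof.
  intros Hb HS [alpha [Ha H]].
  pose proof (Lpos b Hb) as HL. set (L := ln (INR b)) in *.
  set (a0 := Rmax alpha (1/2)).
  assert (Ha0 : 1/2 <= a0 < 1) by (unfold a0; split; [apply Rmax_r|apply Rmax_lub_lt; lra]).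
  set (beta := (1 - a0) / 2).
  exists (a0 + beta). split. { unfold beta; lra. }
  destruct (big_nat (a0 * L / beta)) as [M0 [HM0 HM0l]].
  intros N. destruct (H (N + M0)%nat) as [m [Hm [Hf Hi]]]. exists m. split; [lia|]. split; auto.
  unfold full_parse in Hf. destruct (full_facts b S m Hf) as [HD _].
  destruct (state_facts b S m Hb HS) as [Hrm _].
  rewrite HD, prefix_length in Hi |- *. unfold logb in *. fold L in Hi |- *.
  set (r := nphrases b (prefix S m)) in *.
  rewrite INR_D in Hi |- * by auto.
  pose proof (B1_ge1 b Hb) as B1. pose proof (INR_b b Hb) as Eb.
  set (B := INR (b - 1)) in *. set (R := INR r) in *.
  assert (HR : 0 <= R) by apply pos_INR.
  assert (HRm : R <= INR m) by (apply le_INR; auto).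
  assert (Hm1 : (1 <= m)%nat) by lia.
  assert (HM : 1 <= INR m) by (replace 1 with (INR 1) by reflexivity; apply le_INR; auto).
  set (Mr := INR m) in *.
  assert (Hlm : a0 * L / beta <= ln Mr) by (eapply Rle_trans; [apply HM0l| apply ln_mono_nat; lia]).
  assert (Hbeta : 0 < beta) by (unfold beta; lra).
  assert (Hi2 : (1 + B * R) * ln Mr < a0 * B * Mr * L).
  { replace ((1 + B * R) * ln Mr) with ((1 + B * R) * (ln Mr / L) * L) by (field; lra).
    apply Rmult_lt_compat_r; auto. eapply Rlt_le_trans; [apply Hi|].
    assert (alpha <= a0) by apply Rmax_l. apply Rmult_le_compat_r; [lra|]. apply Rmult_le_compat_r; lra. }
  set (Dr := 1 + B * R) in *.
  assert (HDr : 1 <= Dr) by (unfold Dr; nra).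
  assert (Hsm : Dr < beta * B * Mr).
  { assert (X : Dr * (a0 * L / beta) <= Dr * ln Mr) by (apply Rmult_le_compat_l; lra).
    assert (Y : Dr * (a0 * L) < beta * B * Mr * (a0 * L)).
    { replace (Dr * (a0 * L)) with (Dr * (a0 * L / beta) * beta) by (field; lra).
      replace (beta * B * Mr * (a0 * L)) with (a0 * B * Mr * L * beta) by ring.
      apply Rmult_lt_compat_r; auto. lra. }
    apply Rmult_lt_reg_r with (a0 * L); auto. nra. }
  assert (HDb : Dr <= INR b * Mr) by (unfold Dr; rewrite Eb; nra).
  assert (HlnD : ln Dr <= L + ln Mr).
  { unfold L. rewrite <- ln_mult by lra. apply ln_le'; lra. }
  assert (Hfin : Dr * ln Dr < (a0 + beta) * B * Mr * L).
  { assert (Dr * ln Dr <= Dr * L + Dr * ln Mr) by nra. nra. }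
  replace (Dr * (ln Dr / L)) with (Dr * ln Dr / L) by (field; lra).
  apply Rmult_lt_reg_r with L; auto.
  replace (Dr * ln Dr / L * L) with (Dr * ln Dr) by (field; lra). lra.
Qed.

Lemma ln2_lt1 : ln 2 < 1.
Proof.
  pose proof (exp_ineq1 1 ltac:(lra)). pose proof (ln_increasing 2 (exp 1) ltac:(lra) ltac:(lra)) as X. rewrite ln_exp in X. exact X.
Qed.

Lemma B_of_A b S : (2 <= b)%nat -> (forall i, (S i < b)%nat) -> Pa b S -> Pb b S.
Proof.
  intros Hb HS [eps [He H]].
  pose proof (Lpos b Hb) as HL. set (L := ln (INR b)) in *.
  set (e' := Rmin eps (L / 2)).
  assert (He' : 0 < e' <= eps /\ e' <= L / 2).
  { unfold e'. split; [split|]. apply Rmin_glb_lt; lra. apply Rmin_l. apply Rmin_r. }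
  set (c := L - e').
  set (eta := e' / 2).
  set (t := eta / 4).
  set (K := c + Rabs (ln t) + 1).
  assert (Hc : 0 < c) by (unfold c; lra).
  assert (Heta : 0 < eta) by (unfold eta; lra).
  assert (Ht : 0 < t) by (unfold t; lra).
  assert (HK : 1 <= K) by (unfold K; pose proof (Rabs_pos (ln t)); lra).
  set (delta := eta / (4 * K)).
  assert (Hdelta : 0 < delta) by (unfold delta; apply Rdiv_lt_0_compat; lra).
  exists ((c + eta) / L). split.
  { apply Rmult_lt_reg_r with L; auto. unfold Rdiv. rewrite Rmult_assoc, Rinv_l by lra. unfold c, eta. lra. }
  destruct (big_nat (1 + c + 2 * (1 + c) / delta)) as [J [HJ1 HJl]].
  destruct (INR_archimed t (- ln t - 1 + ln 2 + c)) as [M1 HM1]; auto.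
  intros N.
  destruct (H (2 * (N + J * J + M1 + 1) + 1)%nat) as [n [Hn [Hn1 Hd]]].
  destruct (state_facts b S n Hb HS) as [_ [Hu [_ [m [Hmn [Hf Hj]]]]]].
  set (j := nphrases b (prefix S n)) in *.
  set (u := partial_phrase b (prefix S n)) in *.
  destruct (state_facts b S m Hb HS) as [Hjm [_ [Hsq _]]].
  rewrite Hj in Hjm, Hsq. specialize (Hsq Hf).
  assert (Hm : (N + J * J + M1 + 1 <= m)%nat) by lia.
  assert (HjJ : (J <= j)%nat).
  { destruct (Nat.lt_ge_cases j J) as [X|X]; auto. exfalso.
    assert (j * (j + 1) <= J * J)%nat by nia. lia. }
  exists m. split; [lia|]. split; [exact Hf|].
  destruct (full_facts b S m Hf) as [HD _]. rewrite HD, prefix_length, Hj. fold j.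
  unfold logb. fold L.
  rewrite INR_D by auto.
  pose proof (B1_ge1 b Hb) as B1.
  set (B := INR (b - 1)) in *.
  assert (HnR : 0 < INR n) by (apply lt_0_INR; lia).
  assert (Hlnd : eps * INR n < ln (d_LZ b (prefix S n))).
  { set (x := ln (d_LZ b (prefix S n))) in *.
    assert (E : x = x / INR n * INR n) by (field; lra). rewrite E.
    apply Rmult_lt_compat_r; auto. }
  pose proof (ln_d_upper b S n Hb HS ltac:(nra)) as Up. fold L j in Up.
  set (lnF := ln (INR (factb b j))) in *.
  pose proof (fact_lower b j Hb) as Lo. fold lnF in Lo.
  assert (Hnmj : INR n <= INR m + INR j + 1).
  { rewrite <- Hmn. rewrite plus_INR. assert (INR (length u) <= INR j + 1).
    { replace (INR j + 1) with (INR (j + 1)) by (rewrite plus_INR; simpl; ring). apply le_INR; auto. }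
    lra. }
  assert (HM1n : (M1 <= m)%nat) by lia.
  assert (HJm : (J <= j)%nat) by lia.
  set (Mr := INR m) in *. set (Jr := INR j) in *.
  assert (HMr : 1 <= Mr) by (unfold Mr; replace 1 with (INR 1) by reflexivity; apply le_INR; lia).
  assert (HJr : 1 <= Jr) by (unfold Jr; replace 1 with (INR 1) by reflexivity; apply le_INR; lia).
  assert (HM1r : INR M1 <= Mr) by (apply le_INR; auto).
  assert (I1 : lnF < ln 2 + c * (Mr + Jr + 1)).
  { assert (e' * INR n <= eps * INR n) by (apply Rmult_le_compat_r; lra).
    assert (c * INR n <= c * (Mr + Jr + 1)) by (apply Rmult_le_compat_l; lra).
    unfold c in *. lra. }
  assert (HlnJ : 1 + c + 2 * (1 + c) / delta <= ln Jr).
  { eapply Rle_trans; [apply HJl|]. apply ln_mono_nat; auto. }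
  set (lJ := ln Jr) in *.
  assert (HJd : Jr < delta * Mr).
  { assert (X : Jr * (lJ - 1 - c) < 2 * (1 + c) * Mr).
    { pose proof ln2_lt1. assert (ln 2 + c + c * Mr <= 2 * (1 + c) * Mr) by nra. nra. }
    assert (Y : Jr * (2 * (1 + c) / delta) <= Jr * (lJ - 1 - c)) by (apply Rmult_le_compat_l; lra).
    assert (Z : Jr * (2 * (1 + c)) < delta * Mr * (2 * (1 + c))).
    { replace (Jr * (2 * (1 + c))) with (Jr * (2 * (1 + c) / delta) * delta) by (field; lra).
      replace (delta * Mr * (2 * (1 + c))) with (2 * (1 + c) * Mr * delta) by ring.
      apply Rmult_lt_compat_r; auto. lra. }
    apply Rmult_lt_reg_r with (2 * (1 + c)); [lra|]. exact Z. }
  assert (I4 : Jr * K <= t * Mr).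
  { assert (delta * K = t) by (unfold delta, t; field; lra).
    assert (Jr * K <= delta * Mr * K) by (apply Rmult_le_compat_r; lra). nra. }
  assert (I5 : Jr * ln Mr - Jr * lJ <= t * Mr - Jr - Jr * ln t).
  { pose proof (ln_tangent (Mr / Jr) t ltac:(apply Rdiv_lt_0_compat; lra) Ht) as T.
    unfold Rdiv in T. rewrite ln_mult, ln_Rinv in T by (try apply Rinv_0_lt_compat; lra).
    fold lJ in T.
    assert (X : Jr * (ln Mr + - lJ) <= Jr * (t * (Mr * / Jr) - 1 - ln t)) by (apply Rmult_le_compat_l; lra).
    replace (Jr * (t * (Mr * / Jr) - 1 - ln t)) with (t * Mr - Jr - Jr * ln t) in X by (field; lra).
    lra. }
  pose proof (ln_tangent Mr t ltac:(lra) Ht) as I6.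
  assert (I7 : - ln t - 1 + ln 2 + c < t * Mr).
  { assert (INR M1 * t <= Mr * t) by (apply Rmult_le_compat_r; lra). lra. }
  assert (HlnM : 0 <= ln Mr) by (apply ln_nonneg; lra).
  assert (HKt : c - ln t <= K) by (unfold K; pose proof (Rle_abs (- ln t)); rewrite Rabs_Ropp in *; lra).
  assert (I8 : Jr * (c - ln t) <= Jr * K) by (apply Rmult_le_compat_l; lra).
  assert (Main : ln Mr + Jr * ln Mr < (c + eta) * Mr).
  { assert (Jr * lJ < ln 2 + c * (Mr + Jr + 1) + Jr) by lra.
    assert (eta = 4 * t) by (unfold t; field).
    nra. }
  assert (Main2 : (1 + B * Jr) * ln Mr < (c + eta) * B * Mr).
  { assert (ln Mr <= B * ln Mr) by nra.
    assert (B * (ln Mr + Jr * ln Mr) < B * ((c + eta) * Mr)) by (apply Rmult_lt_compat_l; lra).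
    nra. }
  replace ((1 + B * Jr) * (ln Mr / L)) with ((1 + B * Jr) * ln Mr / L) by (field; lra).
  replace ((c + eta) / L * B * Mr) with ((c + eta) * B * Mr / L) by (field; lra).
  unfold Rdiv. apply Rmult_lt_compat_r; [apply Rinv_0_lt_compat; lra|]. exact Main2.
Qed.

Theorem corollary2p3 (b : nat) (S : nat -> nat)
  (hb : (2 <= b)%nat) (hS : forall i, (S i < b)%nat) :
  ( ( (* (a) limsup_n log d_LZ(S|n)/n > 0 *)
    exists eps : R, eps > 0 /\
      forall N : nat, exists n : nat, (N <= n)%nat /\ (1 <= n)%nat /\
        ln (d_LZ b (prefix S n)) / INR n > eps )
  <->
  ( (* (b) *)
    exists alpha : R, alpha < 1 /\
      forall N : nat, exists n : nat, (N <= n)%nat /\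
        full_parse b (prefix S n) /\
        INR (D b (prefix S n)) * logb b (INR (length (prefix S n)))
          < alpha * INR (b - 1) * INR (length (prefix S n)) ) ) /\
  ( (* (b) <-> (c) *)
    (exists alpha : R, alpha < 1 /\
      forall N : nat, exists n : nat, (N <= n)%nat /\
        full_parse b (prefix S n) /\
        INR (D b (prefix S n)) * logb b (INR (length (prefix S n)))
          < alpha * INR (b - 1) * INR (length (prefix S n)))
    <->
    (exists alpha : R, alpha < 1 /\
      forall N : nat, exists n : nat, (N <= n)%nat /\
        full_parse b (prefix S n) /\
        INR (D b (prefix S n)) * logb b (INR (D b (prefix S n)))
          < alpha * INR (b - 1) * INR (length (prefix S n))) ).
Proof.
  pose proof (A_of_C b S hb hS) as AC. pose proof (C_of_B b S hb hS) as CB.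
  pose proof (B_of_A b S hb hS) as BA.
  unfold Pa, Pb, Pc in *.
  split; split; intros X.
  - apply BA; exact X.
  - apply AC, CB; exact X.
  - apply CB; exact X.
  - apply BA, AC; exact X.
Qed.
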